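(* Let $F$ be a face of $V_O$ and let $\lambda\ne\mu$ be two elements of $\Xi_1$ such that $F\subseteq H_\lambda\cap H_\mu$. Then $\mathrm{supp}(\lambda)$ and $\mathrm{supp}(\mu)$ are consistent in their orientations: there is no oriented edge $e\in\mathbb E$ with $e\in\mathrm{supp}(\lambda)$ and $\bar e\in\mathrm{supp}(\mu)$.
   Context: $G=(V,E)$ is a finite connected graph, possibly with parallel edges and loops; $\mathbb E$ is the set of oriented edges ($e$ and its reverse $\bar e$). Real $1$-chains $x:\mathbb E\to\mathbb R$ satisfy $x_{\bar e}=-x_e$; $\langle x,y\rangle=\sum_{e\in E}x_ey_e$, $q(x)=\langle x,x\rangle$. A flow satisfies $\sum_{e\text{ with tail }v}x_e=0$ at every vertex $v$; $H$ is the space of real flows and $\Lambda$ the lattice of integer flows. $V_O=\{x\in H: q(x)\le q(x-\mu)\ \forall\mu\in\Lambda\}$ is the Voronoi cell of the origin. For a flow $x$, $\mathrm{supp}(x)=\{e\in\mathbb E: x_e>0\}$. A circuit is an orientation of a cycle as a directed cycle; $x^C_e=1$ if $e\in C$, $-1$ if $\bar e\in C$, $0$ otherwise. $\Xi_1=\{x^C: C\text{ a circuit}\}$. For $\lambda\in\Xi_1$, $H_\lambda=\{x\in H: 2\langle x,\lambda\rangle=q(\lambda)\}$. *)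

(* Defs.v *)
From HB Require Import structures.
From mathcomp Require Import all_boot all_order all_algebra.
Set Implicit Arguments. Unset Strict Implicit. Unset Printing Implicit Defensive.
Import Order.TTheory GRing.Theory Num.Theory.
Local Open Scope ring_scope.

(* A finite graph with vertex set V and edge set E; every edge e has a
   (reference) tail [src e] and head [tgt e].  Parallel edges and loops
   are allowed (src/tgt are arbitrary). *)

(* Oriented edges: (e, true) is e itself, (e, false) is its reverse ē. *)
Definition oedge (E : finType) := (E * bool)%type.
Definition orev (E : finType) (o : oedge E) : oedge E := (o.1, ~~ o.2).
Definition otail (V E : finType) (src tgt : E -> V) (o : oedge E) : V :=
  if o.2 then src o.1 else tgt o.1.
Definition ohead (V E : finType) (src tgt : E -> V) (o : oedge E) : V :=
  if o.2 then tgt o.1 else src o.1.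

Definition adjacent (V E : finType) (src tgt : E -> V) : rel V :=
  fun u v => [exists e : E, ((src e == u) && (tgt e == v)) || ((src e == v) && (tgt e == u))].
Definition connected_graph (V E : finType) (src tgt : E -> V) : Prop :=
  forall u v : V, connect (adjacent src tgt) u v.

(* Real 1-chains: x is given by its values on the edges e; x_{ē} = - x_e. *)
Definition chain (R : realFieldType) (E : finType) := {ffun E -> R}.
Definition oval (R : realFieldType) (E : finType) (x : chain R E) (o : oedge E) : R :=
  if o.2 then x o.1 else - x o.1.

Definition inner (R : realFieldType) (E : finType) (x y : chain R E) : R :=
  \sum_(e : E) x e * y e.
Definition qf (R : realFieldType) (E : finType) (x : chain R E) : R := inner x x.

Definition is_flow (R : realFieldType) (V E : finType) (src tgt : E -> V)
  (x : chain R E) : Prop :=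
  forall v : V, \sum_(o : oedge E | otail src tgt o == v) oval x o = 0.

Definition is_int_flow (R : realFieldType) (V E : finType) (src tgt : E -> V)
  (x : chain R E) : Prop :=
  is_flow src tgt x /\ exists z : E -> int, forall e, x e = (z e)%:~R.

Definition voronoi (R : realFieldType) (V E : finType) (src tgt : E -> V)
  (x : chain R E) : Prop :=
  is_flow src tgt x /\
  forall mu : chain R E, is_int_flow src tgt mu -> qf x <= qf (x - mu).

(* (Nonempty) face of the polytope V_O: the intersection of V_O with a
   supporting hyperplane (the whole V_O being allowed, via a = 0, b = 0). *)
Definition is_face (R : realFieldType) (V E : finType) (src tgt : E -> V)
  (F : chain R E -> Prop) : Prop :=
  (exists x, F x) /\
  exists (a : chain R E) (b : R),
    (forall x, voronoi src tgt x -> inner a x <= b) /\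
    (forall x, F x <-> (voronoi src tgt x /\ inner a x = b)).

Definition is_circuit (V E : finType) (src tgt : E -> V) (s : seq (oedge E)) : bool :=
  [&& s != [::], uniq (map fst s), uniq (map (otail src tgt) s)
    & cycle (fun o o' => ohead src tgt o == otail src tgt o') s].

Definition circuit_chain (R : realFieldType) (E : finType) (s : seq (oedge E)) : chain R E :=
  [ffun e => if (e, true) \in s then 1 else if (e, false) \in s then -1 else 0].

Definition in_Xi1 (R : realFieldType) (V E : finType) (src tgt : E -> V)
  (lam : chain R E) : Prop :=
  exists s, is_circuit src tgt s /\ lam = circuit_chain R s.

Definition in_Hlam (R : realFieldType) (V E : finType) (src tgt : E -> V)
  (lam x : chain R E) : Prop :=
  is_flow src tgt x /\ 2 * inner x lam = qf lam.

Definition in_supp (R : realFieldType) (E : finType) (x : chain R E) (o : oedge E) : Prop :=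
  0 < oval x o.

(* Main.v *)
Require Import Defs.
From HB Require Import structures.
From mathcomp Require Import all_boot all_order all_algebra.
Set Implicit Arguments. Unset Strict Implicit. Unset Printing Implicit Defensive.
Import Order.TTheory GRing.Theory Num.Theory.
Local Open Scope ring_scope.

Section Aux.
Variables (V E : finType) (src tgt : E -> V).

Definition ovalz (z : E -> int) (o : oedge E) : int := if o.2 then z o.1 else - z o.1.
Definition iflow (z : E -> int) := forall v : V,
  \sum_(o : oedge E | otail src tgt o == v) ovalz z o = 0.
Definition circ (s : seq (oedge E)) : E -> int :=
  fun e => if (e, true) \in s then 1 else if (e, false) \in s then -1 else 0.
Definition castc (R : realFieldType) (z : E -> int) : chain R E := [ffun e => (z e)%:~R].
Definition Nz (z : E -> int) : nat := (\sum_e `|z e|)%N.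

Lemma oval_cast (R : realFieldType) z o : oval (castc R z) o = (ovalz z o)%:~R.
Proof. by rewrite /oval /ovalz ffunE; case: o.2 => //; rewrite mulrNz. Qed.

Lemma flow_cast (R : realFieldType) z : iflow z -> is_flow src tgt (castc R z).
Proof.
move=> H v; under eq_bigr do rewrite oval_cast.
by rewrite -rmorph_sum H.
Qed.

Lemma circ_cast (R : realFieldType) s : circuit_chain R s = castc R (circ s).
Proof.
apply/ffunP => e; rewrite !ffunE /circ.
by case: ifP => _ //; case: ifP.
Qed.

Lemma orevK : involutive (@orev E).
Proof. by case=> e b; rewrite /orev /= negbK. Qed.

Lemma otail_rev o : otail src tgt (orev o) = Defs.ohead src tgt o.
Proof. by case: o => e []. Qed.

Lemma uniq_map_inj (T1 T2 : eqType) (f : T1 -> T2) (s : seq T1) x y :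
  uniq (map f s) -> x \in s -> y \in s -> f x = f y -> x = y.
Proof.
elim: s => //= a s IH /andP[Ha Hu]; rewrite !inE => /orP[/eqP->|Hx] /orP[/eqP->|Hy] Hf //.
- by case/negP: Ha; rewrite Hf map_f.
- by case/negP: Ha; rewrite -Hf map_f.
- exact: IH.
Qed.

Lemma circ_excl (s : seq (oedge E)) e : uniq (map fst s) -> (e, true) \in s -> (e, false) \in s -> False.
Proof. by move=> Hu Ht Hf; have := uniq_map_inj Hu Ht Hf erefl. Qed.

Lemma ovalz_circ (s : seq (oedge E)) o : uniq (map fst s) ->
  ovalz (circ s) o = (o \in s)%:Z - (orev o \in s)%:Z.
Proof.
move=> Hu; case: o => e b; rewrite /ovalz /circ /orev /=.
have := @circ_excl s e Hu.
by case: b; case: ((e,true) \in s); case: ((e,false) \in s) => //= H; case: H.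
Qed.

Lemma path_belast (T : Type) (h t : T -> V) x p :
  path (fun a b => h a == t b) x p -> map h (belast x p) = map t p.
Proof.
elim: p x => //= y p IH x /andP[/eqP Hxy Hp].
by rewrite Hxy (IH _ Hp).
Qed.

Lemma cycle_rot (T : Type) (h t : T -> V) s :
  cycle (fun a b => h a == t b) s -> map h s = rot 1 (map t s).
Proof.
case: s => // x s /= Hp.
by rewrite rot1_cons -map_rcons -(path_belast Hp) belast_rcons.
Qed.

Lemma sum_mem_count (P : pred (oedge E)) (s : seq (oedge E)) : uniq s ->
  (\sum_(o | P o) (o \in s))%N = count P s.
Proof.
move=> Hu.
rewrite -sum1_count [RHS]big_mkcond /= (big_uniq _ Hu) /= [RHS]big_mkcond /=.
rewrite [LHS]big_mkcond; apply: eq_bigr => o _.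
by case: (P o); case: (o \in s).
Qed.

Lemma sum_mem_countz (P : pred (oedge E)) (s : seq (oedge E)) : uniq s ->
  \sum_(o | P o) ((o \in s) : int) = (count P s : int).
Proof.
move=> Hu; rewrite -sum_mem_count //.
by rewrite (big_morph Posz PoszD erefl).
Qed.

Lemma circ_flow (s : seq (oedge E)) : uniq (map fst s) ->
  cycle (fun o o' => Defs.ohead src tgt o == otail src tgt o') s -> iflow (circ s).
Proof.
move=> Hu Hc v.
have Hus : uniq s by apply: map_uniq Hu.
under eq_bigr do rewrite ovalz_circ //.
rewrite sumrB sum_mem_countz //.
have -> : \sum_(i | otail src tgt i == v) ((orev i \in s) : int) =
   \sum_(i | Defs.ohead src tgt i == v) ((i \in s) : int).
  rewrite [LHS](reindex_inj (inv_inj orevK)).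
  by apply: eq_big => o; rewrite ?otail_rev ?orevK.
rewrite sum_mem_countz //.
have H : count (fun o => otail src tgt o == v) s = count (fun o => Defs.ohead src tgt o == v) s.
  have Hp : perm_eq (rot 1 (map (otail src tgt) s)) (map (otail src tgt) s) by rewrite perm_rot.
  have := permP Hp (pred1 v).
  by rewrite -(cycle_rot Hc) !count_map.
by rewrite H subrr.
Qed.

Lemma ovalz_rev z o : ovalz z (orev o) = - ovalz z o.
Proof. by case: o => e []; rewrite /ovalz /orev /= ?opprK. Qed.

Lemma out_pos (z : E -> int) o : iflow z -> 0 < ovalz z o ->
  [exists o', (0 < ovalz z o') && (otail src tgt o' == Defs.ohead src tgt o)].
Proof.
move=> Hf Ho; case: existsP => // Hne; exfalso.
have H : forall o', ~~ ((0 < ovalz z o') && (otail src tgt o' == Defs.ohead src tgt o)).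
  by move=> o'; apply/negP => Hc; apply: Hne; exists o'.
have := Hf (Defs.ohead src tgt o).
rewrite (bigD1 (orev o)) ?otail_rev //= ovalz_rev.
move=> Hs.
have Hle : \sum_(o' | (otail src tgt o' == Defs.ohead src tgt o) && (o' != orev o)) ovalz z o' <= 0.
  apply: sumr_le0 => o' /andP[Ht _].
  have := H o'; rewrite Ht andbT => Hn; by rewrite leNgt.
have Hn : - ovalz z o < 0 by rewrite oppr_lt0.
by have := ltr_wnDr Hle Hn; rewrite Hs ltxx.
Qed.

Lemma find_cycle (z : E -> int) o0 : iflow z -> 0 < ovalz z o0 ->
  exists s : seq (oedge E), [/\ s != [::], uniq (map fst s),
    cycle (fun o o' => Defs.ohead src tgt o == otail src tgt o') s &
    all (fun o => 0 < ovalz z o) s].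
Proof.
move=> Hfl Ho0.
pose pos o := 0 < ovalz z o.
pose Pv v := [exists o, pos o && (otail src tgt o == v)].
pose arc v := odflt o0 [pick o | pos o && (otail src tgt o == v)].
pose f v := Defs.ohead src tgt (arc v).
have Harc : forall v, Pv v -> pos (arc v) && (otail src tgt (arc v) == v).
  move=> v /existsP [o Ho]; rewrite /arc; case: pickP => [o' //|/(_ o)].
  by rewrite Ho.
have HPf : forall v, Pv v -> Pv (f v).
  move=> v /Harc /andP[Hp _]; exact: out_pos Hfl Hp.
have HPi : forall n v, Pv v -> Pv (iter n f v).
  by elim=> [|n IH] v Hv //=; apply: HPf; apply: IH.
set v0 := otail src tgt o0.
have Hv0 : Pv v0 by apply/existsP; exists o0; rewrite /pos Ho0 eqxx.
have := looping_order f v0.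
case/trajectP => i Hi Hit.
set y := iter i f v0.
have Hy : Pv y by apply: HPi.
have Hcy : fcycle f (orbit f y).
  apply/(orbitPcycle 0 3); exists (order f v0 - i).-1.
  rewrite prednK ?subn_gt0 // /y -iterD subnK ?Hit //; exact: ltnW.
have Hall : all Pv (orbit f y).
  apply/allP => u /trajectP [j _ ->]; exact: HPi.
exists (map arc (orbit f y)); split.
- by case: (orbit f y) (in_orbit f y).
- rewrite -map_comp map_inj_in_uniq ?orbit_uniq // => u w Hu Hw /=.
  have /andP[Hpu /eqP Htu] := Harc u (allP Hall u Hu).
  have /andP[Hpw /eqP Htw] := Harc w (allP Hall w Hw).
  move: (arc u) (arc w) Hpu Hpw Htu Htw => [e1 b1] [e2 b2] Hpu Hpw Htu Htw /= He.
  subst e2.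
  case: b1 b2 Hpu Hpw Htu Htw => [] [] Hpu Hpw Htu Htw; rewrite -?Htu -?Htw //.
  + by move: Hpw; rewrite /pos /ovalz /= oppr_gt0 => /(lt_trans Hpu); rewrite ltxx.
  + by move: Hpu; rewrite /pos /ovalz /= oppr_gt0 => /(lt_trans Hpw); rewrite ltxx.
- rewrite cycle_map; apply: (sub_in_cycle (P := Pv)) Hall Hcy.
  move=> u w Hu Hw /=; rewrite /f => /eqP <-.
  by have /andP[_ /eqP ->] := Harc _ (HPf u Hu).
- rewrite all_map; apply/allP => u Hu /=.
  by have /andP[] := Harc u (allP Hall u Hu).
Qed.

End Aux.

Lemma abs_step (a : int) : 0 < a -> `|a|%N = (1 + `|(a - 1)%R|)%N.
Proof. case: a => [[|n]|n] //= _. by rewrite subn1 add1n. Qed.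
Lemma abs_stepN (a : int) : a < 0 -> `|a|%N = (1 + `|(a - -1)%R|)%N.
Proof. move=> H; rewrite -abszN abs_step ?oppr_gt0 // -abszN opprB opprK addrC. done. Qed.
Lemma sq_unit (R : realFieldType) (b : int) : (b == 1) || (b == -1) || (b == 0) -> (b%:~R : R) * b%:~R = (`|b|%N)%:R.
Proof. case/orP => [/orP[]|] /eqP->. - by rewrite mulr1.
- by rewrite mulrNz mulrNN mulr1.
- by rewrite mulr0.
Qed.

Section Main.
Variables (R : realFieldType) (V E : finType) (src tgt : E -> V).

Lemma inner_addr (x a b : chain R E) : inner x (a + b) = inner x a + inner x b.
Proof. by rewrite /inner -big_split; apply: eq_bigr => e _; rewrite ffunE mulrDr. Qed.

Lemma qf_sub (x y : chain R E) : qf (x - y) = qf x - 2 * inner x y + qf y.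
Proof.
rewrite /qf /inner mulr_sumr -sumrB -big_split; apply: eq_bigr => e _ /=.
rewrite !ffunE mulrBl !mulrBr opprB [y e * x e]mulrC mulr_natl mulr2n.
by rewrite opprD !addrA [LHS]addrAC.
Qed.

Lemma castcD (a b : E -> int) : castc R (fun e => a e + b e) = castc R a + castc R b.
Proof. by apply/ffunP => e; rewrite !ffunE rmorphD. Qed.

Lemma castc0 (a : E -> int) : (forall e, a e = 0) -> castc R a = 0.
Proof. by move=> H; apply/ffunP => e; rewrite !ffunE H. Qed.

Lemma inner0 (x : chain R E) : inner x 0 = 0.
Proof. by rewrite /inner big1 // => e _; rewrite ffunE mulr0. Qed.

Lemma circ_vals (s : seq (oedge E)) e :
  (circ s e == 1) || (circ s e == -1) || (circ s e == 0).
Proof. by rewrite /circ; case: ifP => _; last case: ifP. Qed.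

Lemma qf_circ (s : seq (oedge E)) : qf (castc R (circ s)) = (Nz (circ s))%:R.
Proof.
rewrite /qf /inner /Nz natr_sum; apply: eq_bigr => e _.
by rewrite !ffunE sq_unit // circ_vals.
Qed.

Lemma circ_int_flow (s : seq (oedge E)) : uniq (map fst s) ->
  cycle (fun o o' => Defs.ohead src tgt o == otail src tgt o') s ->
  is_int_flow src tgt (castc R (circ s)).
Proof.
move=> Hu Hc; split; first by apply: flow_cast; apply: circ_flow.
by exists (circ s) => e; rewrite ffunE.
Qed.

Lemma vor_circ (x : chain R E) (s : seq (oedge E)) : voronoi src tgt x ->
  uniq (map fst s) ->
  cycle (fun o o' => Defs.ohead src tgt o == otail src tgt o') s ->
  2 * inner x (castc R (circ s)) <= (Nz (circ s))%:R.
Proof.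
move=> [_ Hv] Hu Hc; have := Hv _ (circ_int_flow Hu Hc).
by rewrite qf_sub qf_circ -addrA lerDl addrC subr_ge0.
Qed.

Lemma ovalz_sub (a b : E -> int) o : ovalz (fun e => a e - b e) o = ovalz a o - ovalz b o.
Proof. by case: o => e [] //=; rewrite /ovalz /= opprD. Qed.

Lemma iflow_sub (a b : E -> int) : iflow src tgt a -> iflow src tgt b ->
  iflow src tgt (fun e => a e - b e).
Proof.
move=> Ha Hb v; under eq_bigr do rewrite ovalz_sub.
by rewrite sumrB Ha Hb subr0.
Qed.

Lemma bound_step (x : chain R E) (Hx : voronoi src tgt x) (z : E -> int) :
  (forall z', (Nz z' < Nz z)%N -> iflow src tgt z' ->
     2 * inner x (castc R z') <= (Nz z')%:R) ->
  iflow src tgt z -> 2 * inner x (castc R z) <= (Nz z)%:R.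
Proof.
move=> IH Hz.
case: (pickP (fun e => z e != 0)) => [e He|H0]; last first.
  rewrite castc0 ?inner0 ?mulr0 ?ler0n // => e.
  by have := H0 e => /negbFE/eqP.
set o0 := (e, 0 < z e).
have Ho0 : 0 < ovalz z o0.
  rewrite /ovalz /o0 /=; case: ifP => // /negbT; rewrite -leNgt => Hle.
  by rewrite oppr_gt0 lt_neqAle He.
have [s [Hs Hu Hc Hpos]] := find_cycle Hz Ho0.
have Hconf : forall e, `|z e|%N = (`|circ s e| + `|(z e - circ s e)%R|)%N.
  move=> e'; rewrite /circ.
  case: ifP => Ht.
    have := allP Hpos _ Ht; rewrite /ovalz /= => Hp; by rewrite abs_step.
  case: ifP => Hf.
    have := allP Hpos _ Hf; rewrite /ovalz /= oppr_gt0 => Hp; by rewrite abs_stepN.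
  by rewrite subr0.
have HN : Nz z = (Nz (circ s) + Nz (fun e => (z e - circ s e)%R))%N.
  by rewrite /Nz -big_split; apply: eq_bigr.
have Hc0 : (0 < Nz (circ s))%N.
  have [o Ho] : exists o, o \in s by case: s Hs {Hu Hc Hpos Hconf HN} => // o s' _; exists o; rewrite mem_head.
  rewrite /Nz (bigD1 o.1) //=; apply: leq_trans (leq_addr _ _).
  rewrite absz_gt0 /circ; case: o Ho => e' [] Ho /=; rewrite Ho //.
  by case: ifP.
have Hzz : castc R z = castc R (circ s) + castc R (fun e => z e - circ s e).
  rewrite -castcD; apply/ffunP => e'; rewrite !ffunE.
  by rewrite addrC subrK.
rewrite Hzz inner_addr mulrDr HN natrD.
apply: lerD; first exact: vor_circ.
apply: IH; first by rewrite HN -{1}[Nz _]add0n ltn_add2r.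
by apply: iflow_sub => //; apply: circ_flow.
Qed.

Lemma bound (x : chain R E) (Hx : voronoi src tgt x) n : forall z : E -> int,
  (Nz z <= n)%N -> iflow src tgt z -> 2 * inner x (castc R z) <= (Nz z)%:R.
Proof.
elim: n => [|n IH] z Hn Hz; apply: (bound_step Hx) Hz => z' Hlt Hz'.
  by have := leq_trans Hlt Hn.
by apply: IH => //; rewrite -ltnS (leq_trans Hlt Hn).
Qed.

Lemma ovalz_add (a b : E -> int) o : ovalz (fun e => a e + b e) o = ovalz a o + ovalz b o.
Proof. by case: o => e [] //=; rewrite /ovalz /= opprD. Qed.

Lemma iflow_add (a b : E -> int) : iflow src tgt a -> iflow src tgt b ->
  iflow src tgt (fun e => a e + b e).
Proof.
move=> Ha Hb v; under eq_bigr do rewrite ovalz_add.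
by rewrite big_split /= Ha Hb addr0.
Qed.

End Main.

Lemma tri01 (a b : int) : (a==1)||(a==-1)||(a==0) -> (b==1)||(b==-1)||(b==0) ->
  (`|(a + b)%R| <= `|a| + `|b|)%N.
Proof. by move=> /orP[/orP[]|] /eqP-> /orP[/orP[]|] /eqP->. Qed.

Lemma pair_bound (a b : int) (bo : bool) : (a==1)||(a==-1)||(a==0) ->
  (b==1)||(b==-1)||(b==0) -> 0 < (if bo then a else -a) ->
  0 < - (if bo then b else -b) -> (`|(a + b)%R| + 2 <= `|a| + `|b|)%N.
Proof. by move=> /orP[/orP[]|] /eqP-> /orP[/orP[]|] /eqP->; case: bo. Qed.

Lemma sum_strict (E : finType) (f g : E -> nat) e0 : (forall e, f e <= g e)%N ->
  (f e0 + 2 <= g e0)%N -> (\sum_e f e + 2 <= \sum_e g e)%N.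
Proof.
move=> H H0; rewrite (bigD1 e0) // [X in (_ <= X)%N](bigD1 e0) //= addnAC.
by apply: leq_add => //; apply: leq_sum.
Qed.

Theorem mainTheorem5 (R : realFieldType) (V E : finType) (src tgt : E -> V)
  (Gconn : connected_graph src tgt)
  (F : chain R E -> Prop) (HF : is_face src tgt F)
  (lam mu : chain R E) (Hlam : in_Xi1 src tgt lam) (Hmu : in_Xi1 src tgt mu)
  (Hne : lam <> mu)
  (Hsub : forall x, F x -> in_Hlam src tgt lam x /\ in_Hlam src tgt mu x) :
  ~ (exists o : oedge E, in_supp lam o /\ in_supp mu (orev o)).
Proof.
move=> [o [Hlo Hmo]].
case: HF => [[x Fx] [a [b [_ HFe]]]].
have Hvx : voronoi src tgt x by case: (HFe x) => H _; case: (H Fx).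
have [[_ Hl] [_ Hm]] := Hsub x Fx.
case: Hlam Hl Hlo => s1 [Hc1 ->] Hl Hlo.
case: Hmu Hm Hmo => s2 [Hc2 ->] Hm Hmo.
move/and4P: Hc1 => [_ Hu1 _ Hcy1]; move/and4P: Hc2 => [_ Hu2 _ Hcy2].
rewrite !circ_cast in Hl Hm Hlo Hmo.
rewrite /in_supp !oval_cast !ltr0z ovalz_rev in Hlo Hmo.
rewrite !qf_circ in Hl Hm.
have Hfl : iflow src tgt (fun e => circ s1 e + circ s2 e).
  by apply: iflow_add; apply: circ_flow.
have := bound Hvx (leqnn _) Hfl.
rewrite castcD inner_addr mulrDr Hl Hm -natrD ler_nat.
apply/negP; rewrite -ltnNge.
have H2 : (Nz (fun e => (circ s1 e + circ s2 e)%R) + 2 <= Nz (circ s1) + Nz (circ s2))%N.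
  rewrite /Nz -big_split /=.
  apply: (sum_strict (e0 := o.1)) => [e|].
    by apply: tri01; apply: circ_vals.
  move: Hlo Hmo; rewrite /ovalz => Hlo Hmo.
  by apply: (pair_bound (bo := o.2)) => //; apply: circ_vals.
by apply: leq_trans H2; rewrite addn2.
Qed.
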